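(* Let $d\ge2$, $n\ge1$, $H_i(X)=\sum_{|\alpha|=d}\frac{H_{i,\alpha}}{\alpha!}X^\alpha$ ($i\in[n]$) with complex coefficients, and suppose $(JH)^p=0$ for some integer $1\le p\le n$. Then for every $n$-type tree $\mathcal{T}=(T,\tau)$ with $T\in\mathcal{C}_k^{(d)}$ and every path $(v_0,\dots,v_p)$ in $T$, $$\sum_{\mathcal{T}'\in\mathrm{Sh}(\mathcal{T};v_0,\dots,v_p)}\mathcal{E}_H(\mathcal{T}')=0.$$
   Context: A $d$-Catalan tree is a rooted planar tree in which each vertex has $0$ or $d$ children; $\mathcal{C}_k^{(d)}$ is the set of those with $k$ internal vertices. An $n$-type tree $(T,\tau)$ is such a tree with a type function $\tau$ from its vertices to $[n]$. A path $(v_0,\dots,v_p)$ satisfies: $v_i$ is a child of $v_{i-1}$. The labelled shuffle class $\mathrm{Sh}(\mathcal{T};v_0,\dots,v_p)$ is the set of (distinct) $n$-type trees obtained from $\mathcal{T}$ by (i) rearranging the labelled subtrees subtended by the $(d-1)p$ siblings of $v_1,\dots,v_p$ among those sibling positions, and (ii) giving arbitrary new types in $[n]$ to $v_1,\dots,v_{p-1}$. For an internal vertex $v$, $\mu(v)\in\mathbb{Z}^n_{\ge0}$ counts its children of each type, and $\mathcal{E}_H(\mathcal{T})=\prod_{v\text{ internal}}H_{\tau(v),\mu(v)}$. $JH$ is the Jacobian matrix of $H=(H_1,\dots,H_n)$. *)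

(* Defs.v *)
From HB Require Import structures.
From mathcomp Require Import all_boot all_order all_algebra.
From mathcomp Require Import reals.
From mathcomp Require Import complex.
From mathcomp Require Import mpoly.
Set Implicit Arguments. Unset Strict Implicit. Unset Printing Implicit Defensive.
Import GRing.Theory.
Local Open Scope ring_scope.

(* n-type planar trees: a leaf [GenTree.Leaf x] or an internal vertex
   [GenTree.Node x children]; x : nat is the type (meant to lie in [0, n)). *)
Definition ttree := GenTree.tree nat.

Definition rtype (t : ttree) : nat :=
  match t with GenTree.Leaf x => x | GenTree.Node x _ => x end.

Definition settype (x : nat) (t : ttree) : ttree :=
  match t with GenTree.Leaf _ => GenTree.Leaf x | GenTree.Node _ ch => GenTree.Node x ch end.

Fixpoint wf_tree (d n : nat) (t : ttree) : bool :=
  match t with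
  | GenTree.Leaf x => (x < n)%N
  | GenTree.Node x ch => [&& (x < n)%N, size ch == d & all (wf_tree d n) ch]
  end.

(* [valid_path t cs]: starting at the root of t and following child indices cs,
   every vertex met before the last one is internal and every index is in range;
   i.e. cs describes a downward path (v_0 = root, v_1, ..., v_{|cs|}) in t. *)
Fixpoint valid_path (t : ttree) (cs : seq nat) : bool :=
  match cs with
  | [::] => true
  | c :: cs' => match t with
                | GenTree.Leaf _ => false
                | GenTree.Node _ ch => (c < size ch)%N && valid_path (nth t ch c) cs'
                end
  end.

Fixpoint subtree_at (t : ttree) (a : seq nat) : ttree :=
  match a with
  | [::] => t
  | c :: a' => match t with
               | GenTree.Leaf _ => t
               | GenTree.Node _ ch => subtree_at (nth t ch c) a'
               end
  end.

Fixpoint replace_at (t : ttree) (a : seq nat) (s : ttree) : ttree :=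
  match a with
  | [::] => s
  | c :: a' => match t with
               | GenTree.Leaf _ => t
               | GenTree.Node x ch =>
                   GenTree.Node x (set_nth t ch c (replace_at (nth t ch c) a' s))
               end
  end.

(* the subtrees subtended by the siblings of v_1, ..., v_p (in order) *)
Fixpoint spine_sibs (t : ttree) (cs : seq nat) : seq ttree :=
  match cs with
  | [::] => [::]
  | c :: cs' => match t with
                | GenTree.Leaf _ => [::]
                | GenTree.Node _ ch =>
                    take c ch ++ drop c.+1 ch ++ spine_sibs (nth t ch c) cs'
                end
  end.

(* rebuild the tree along the path cs, placing the subtrees [sibs] (in order) at
   the sibling positions of v_1..v_p, and giving v_1..v_{p-1} the types ts. *)
Fixpoint regraft (t : ttree) (cs : seq nat) (ts : seq nat) (sibs : seq ttree) : ttree :=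
  match cs with
  | [::] => t
  | c :: cs' => match t with
                | GenTree.Leaf _ => t
                | GenTree.Node x ch =>
                    let m := (size ch).-1 in
                    let S := take m sibs in
                    let v := nth t ch c in
                    let v' := if cs' is [::] then v else settype (head 0%N ts) v in
                    GenTree.Node x (take c S ++ regraft v' cs' (behead ts) (drop m sibs) :: drop c S)
                end
  end.

Fixpoint typeseqs (m n : nat) : seq (seq nat) :=
  match m with
  | 0 => [:: [::]]
  | m'.+1 => [seq i :: s | i <- iota 0 n, s <- typeseqs m' n]
  end.

(* Labelled shuffle class Sh(T; v_0,...,v_p), where v_0 has address a in T and
   cs = (c_1,...,c_p) are the child indices of v_1,...,v_p; listed without
   repetition. *)
Definition shuffle_class (n : nat) (T : ttree) (a cs : seq nat) : seq ttree :=
  let t0 := subtree_at T a in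
  undup [seq replace_at T a (regraft t0 cs ts sibs)
        | sibs <- permutations (spine_sibs t0 cs), ts <- typeseqs (size cs).-1 n].

Definition mu (n : nat) (ch : seq ttree) : 'X_{1..n} :=
  [multinom (count (fun c => rtype c == i) ch) | i < n].

Definition mfact (n : nat) (m : 'X_{1..n}) : nat := (\prod_(i < n) (m i)`!)%N.

Section Coefs.
Variables (C : fieldType) (n : nat).
(* H_{i,alpha} where H_i = sum_alpha H_{i,alpha}/alpha! X^alpha *)
Definition Hcoef (H : 'I_n -> {mpoly C[n]}) (x : nat) (m : 'X_{1..n}) : C :=
  if insub x is Some i then (mfact m)%:R * (H i)@_m else 0.

Fixpoint EH (H : 'I_n -> {mpoly C[n]}) (t : ttree) : C :=
  match t with
  | GenTree.Leaf _ => 1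
  | GenTree.Node x ch => Hcoef H x (mu n ch) * foldr (fun c acc => EH H c * acc) 1 ch
  end.

Definition jacobian (H : 'I_n -> {mpoly C[n]}) : 'M[{mpoly C[n]}]_n :=
  \matrix_(i < n, j < n) mderiv j (H i).
End Coefs.

(* Main.v *)
Require Import Defs.
From HB Require Import structures.
From mathcomp Require Import all_boot all_order all_algebra.
From mathcomp Require Import reals.
From mathcomp Require Import complex.
From mathcomp Require Import mpoly.
From mathcomp Require Import perm fingroup.
From mathcomp Require Import ring.
Set Implicit Arguments. Unset Strict Implicit. Unset Printing Implicit Defensive.
Import GRing.Theory Num.Theory.
Local Open Scope ring_scope.


Lemma mem_consallpairs (r1 : seq nat) (r2 : seq (seq nat)) x w :
  (x :: w \in [seq i :: s | i <- r1, s <- r2]) = (x \in r1) && (w \in r2).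
Proof.
apply/allpairsP/andP => [[[i s] /= [H1 H2 [-> ->]]] | [H1 H2]]; first by [].
by exists (x, w).
Qed.

Lemma mem_typeseqs l n w :
  (w \in typeseqs l n) = (size w == l) && all (fun x => (x < n)%N) w.
Proof.
elim: l w => [|l IH] [|x w] //=.
- by apply/negbTE/allpairsP => -[[i s] /= [_ _]].
by rewrite mem_consallpairs IH mem_iota add0n /= eqSS andbCA.
Qed.

Lemma typeseqs_uniq l n : uniq (typeseqs l n).
Proof.
elim: l => [|l IH] //=; apply: allpairs_uniq => //; first exact: iota_uniq.
by move=> [a b] [c e] _ _ /= [-> ->].
Qed.

Lemma big_typeseqsD (V : nmodType) a b n (F : seq nat -> V) :
  \sum_(w <- typeseqs (a + b) n) F w =
  \sum_(v <- typeseqs a n) \sum_(w <- typeseqs b n) F (v ++ w).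
Proof.
elim: a F => [|a IH] F; first by rewrite /= big_seq1.
rewrite addSn /= !big_allpairs_dep; apply: eq_bigr => i _.
by rewrite IH.
Qed.

Lemma sum_pred1_seq (T : eqType) (V : nmodType) (r : seq T) x (F : T -> V) :
  uniq r -> x \in r -> \sum_(t <- r | t == x) F t = F x.
Proof.
move=> Ur xr; rewrite (big_rem x) //= eqxx big1_seq ?addr0 //.
move=> t /andP [/eqP -> ]; rewrite mem_rem_uniq // inE eqxx //.
Qed.


Section Stab.
Variables (T : eqType) (N : nat) (s : N.-tuple T).

Definition ps (σ : 'S_N) : seq T := tval [tuple tnth s (σ i) | i < N].

Lemma ps_perm σ : perm_eq (ps σ) s.
Proof. by apply/tuple_permP; exists σ. Qed.

Lemma ps_eq σ τ : (ps σ == ps τ) = [forall i, tnth s (σ i) == tnth s (τ i)].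
Proof.
apply/eqP/forallP => [E i | E].
  have E' : [tuple tnth s (σ i) | i < N] = [tuple tnth s (τ i) | i < N] by apply: val_inj.
  by have := congr1 (fun x => tnth x i) E'; rewrite !tnth_mktuple => ->.
rewrite /ps; congr tval; apply: eq_from_tnth => i; rewrite !tnth_mktuple.
exact/eqP/E.
Qed.

Lemma ps1 : ps 1 = s.
Proof.
rewrite /ps; congr tval; apply: eq_from_tnth => i; by rewrite tnth_mktuple perm1.
Qed.

Lemma card_ps τ : #|[pred σ : 'S_N | ps σ == ps τ]| = #|[pred σ : 'S_N | ps σ == s]|.
Proof.
rewrite -!sum1_card (reindex_inj (mulgI τ)) /=; apply: eq_bigl => ρ.
rewrite !inE -ps1 !ps_eq; apply/forallP/forallP => H j.
  have := H ((τ^-1)%g j); rewrite permM permKV perm1.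
  done.
by rewrite permM; have := H (τ j); rewrite perm1.
Qed.

Lemma sum_ps (V : nmodType) (F : seq T -> V) :
  \sum_(σ : 'S_N) F (ps σ) =
  (\sum_(t <- permutations s) F t) *+ #|[pred σ : 'S_N | ps σ == s]|.
Proof.
transitivity (\sum_(σ : 'S_N) \sum_(t <- permutations s | t == ps σ) F t).
  apply: eq_bigr => σ _; rewrite sum_pred1_seq //.
    exact: permutations_uniq.
  by rewrite mem_permutations ps_perm.
under eq_bigr do rewrite big_mkcond.
rewrite exchange_big /= -sumrMnl big_seq [RHS]big_seq; apply: eq_bigr => t.
rewrite mem_permutations => /tuple_permP [τ Et].
rewrite -big_mkcond /= (eq_bigl (fun σ => σ \in [pred σ | ps σ == ps τ])); last first.
  by move=> σ; rewrite inE Et eq_sym.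
by rewrite sumr_const card_ps.
Qed.

Lemma card_ps_gt0 : (0 < #|[pred σ : 'S_N | ps σ == s]|)%N.
Proof. by apply/card_gt0P; exists 1%g; rewrite inE ps1. Qed.
End Stab.


Section Mon.
Variable n : nat.

Definition mon (w : seq nat) : 'X_{1..n} := [multinom count (fun x : nat => x == i) w | i < n].

Lemma monE w (i : 'I_n) : mon w i = count (fun x : nat => x == i) w.
Proof. by rewrite mnmE. Qed.

Lemma mon_cat v w : mon (v ++ w) = (mon v + mon w)%MM.
Proof. by apply/mnmP => i; rewrite mnmDE !monE count_cat. Qed.

Lemma mon_nil : mon [::] = 0%MM.
Proof. by apply/mnmP => i; rewrite mnm0E. Qed.

Lemma mon1 (k : 'I_n) : mon [:: val k] = U_(k)%MM.
Proof. by apply/mnmP => i; rewrite mnm1E monE /= addn0. Qed.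

Lemma mon_cons (k : 'I_n) w : mon (val k :: w) = (U_(k) + mon w)%MM.
Proof. by rewrite -cat1s mon_cat mon1. Qed.

Lemma mon_perm v w : perm_eq v w -> mon v = mon w.
Proof. by move=> /seq.permP E; apply/mnmP => i; rewrite !monE E. Qed.

Lemma mdeg_mon w : all (fun x => (x < n)%N) w -> mdeg (mon w) = size w.
Proof.
elim: w => [|x w IH] /=; first by rewrite mon_nil mdeg0.
case/andP => xn /IH {}IH.
by rewrite (mon_cons (Ordinal xn)) mdegD mdeg1 IH.
Qed.

Lemma mon_eq_perm v w : all (fun x => (x < n)%N) v -> all (fun x => (x < n)%N) w ->
  (mon v == mon w) = perm_eq v w.
Proof.
move=> Hv Hw; apply/eqP/idP; last exact: mon_perm.
move=> E; apply/allP => x; rewrite mem_cat => /orP xin.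
have xn : (x < n)%N.
  by case: xin => xin; [exact: (allP Hv) | exact: (allP Hw)].
have := congr1 (fun m : 'X_{1..n} => m (Ordinal xn)) E; rewrite /= !monE /=.
by move=> ->; rewrite /= eqxx.
Qed.

Definition cnt m (b : 'X_{1..n}) : nat := \sum_(v <- typeseqs m n) (mon v == b : nat).

Lemma mfact0 : mfact (0%MM : 'X_{1..n}) = 1%N.
Proof. by rewrite /mfact big1 // => i _; rewrite mnm0E. Qed.

Lemma mfact_gt0 (b : 'X_{1..n}) : (0 < mfact b)%N.
Proof. by rewrite /mfact prodn_gt0 // => i; rewrite fact_gt0. Qed.

Lemma mfactU (b : 'X_{1..n}) k : mfact (b + U_(k))%MM = (mfact b * (b k).+1)%N.
Proof.
rewrite /mfact (bigD1 k) //= [in RHS](bigD1 k) //= mnmDE mnm1E eqxx addn1 factS.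
rewrite [RHS]mulnC mulnA; congr (_ * _)%N.
by apply: eq_bigr => i /negbTE ik; rewrite mnmDE mnm1E eq_sym ik addn0.
Qed.

Lemma cnt_fact m b : (cnt m b * mfact b)%N = ((mdeg b == m) * m`!)%N.
Proof.
elim: m b => [|m IH] b.
  rewrite /cnt /= big_seq1 mon_nil eq_sym -mdeg_eq0.
  case: eqP => [/eqP|] //=; rewrite mdeg_eq0 => /eqP ->.
  by rewrite mfact0.
rewrite /cnt /= big_allpairs_dep /=.
have -> : iota 0 n = index_iota 0 n by rewrite /index_iota subn0.
rewrite big_mkord big_distrl /=.
under eq_bigr => i _.
  have -> : \sum_(v <- typeseqs m n) (mon (val i :: v) == b : nat) =
            ((0 < b i)%N * cnt m (b - U_(i))%MM)%N.
    rewrite /cnt; case: (posnP (b i)) => bi.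
      rewrite mul0n big1 // => v _; rewrite mon_cons; case: eqP => // E.
      by move: bi; rewrite -E mnmDE mnm1E eqxx.
    rewrite mul1n; apply: eq_bigr => v _; congr nat_of_bool.
    rewrite mon_cons addmC; apply/eqP/eqP => [<-|->]; first by rewrite addmK.
    by rewrite submK // lep1mP -lt0n.
  over.
have Hb : forall i : 'I_n, (0 < b i)%N -> mfact b = (b i * mfact (b - U_(i))%MM)%N.
  move=> i bi; rewrite -{1}(submK (m:=U_(i)%MM) (m':=b)) ?lep1mP -?lt0n // mfactU mulnC.
  by rewrite mnmBE mnm1E eqxx subn1 prednK.
transitivity (\sum_(i < n) ((mdeg b == m.+1) * (b i * m`!)))%N.
  apply: eq_bigr => i _; case: (posnP (b i)) => bi; first by rewrite bi !muln0.
  rewrite mul1n (Hb i bi) mulnCA IH.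
  have -> : (mdeg (b - U_(i))%MM == m) = (mdeg b == m.+1).
    rewrite -{2}(submK (m:=U_(i)%MM) (m':=b)) ?lep1mP -?lt0n // mdegD mdeg1 addn1 eqSS //.
  by rewrite mulnCA.
rewrite -big_distrr /= -big_distrl /= -mdegE.
case: eqP => [->|]; by rewrite ?mul0n // mul1n factS.
Qed.
End Mon.


Section Alg.
Variables (C : numFieldType) (n m : nat) (H : 'I_n -> {mpoly C[n]}).

Lemma HcoefE (i : 'I_n) b : Hcoef H i b = (mfact b)%:R * (H i)@_b.
Proof. by rewrite /Hcoef valK. Qed.

Lemma Q1E (i k : 'I_n) : H i \is m.+1.-homog ->
  \sum_(v <- typeseqs m n) Hcoef H i (mon n (val k :: v)) *: 'X_[mon n v]
  = (m`!)%:R *: mderiv k (H i).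
Proof.
move=> hom; apply/mpolyP => b.
rewrite raddf_sum /=.
transitivity (\sum_(v <- typeseqs m n)
   ((mon n v == b)%:R * ((mfact (b + U_(k))%MM)%:R * (H i)@_(b + U_(k))))).
  apply: eq_bigr => v _; rewrite mcoeffZ mcoeffX HcoefE mon_cons.
  case: eqP => [->|_]; rewrite ?mulr1 ?mulr0 ?mul1r ?mul0r // addmC //.
rewrite -mulr_suml -natr_sum -/(cnt m b) mcoeffZ mcoeff_mderiv.
have [Hd|Hd] := eqVneq (mdeg b) m.
  rewrite ?mulr1 -[(H i)@_ _ *+ _]mulr_natl !mulrA -!natrM; congr (_%:R * _).
  by rewrite mfactU mulnA cnt_fact Hd eqxx mul1n.
rewrite (dhomog_nemf_coeff hom) ?mulr0 ?mul0rn.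
  by rewrite mulr0.
by rewrite /= mdegD mdeg1 addn1 eqSS.
Qed.

Fixpoint Wrec (i l : nat) (ts u : seq nat) (j : nat) : C :=
  match l with
  | 0 => 1
  | l'.+1 => let k := (if l' is 0 then j else head 0%N ts) in
      Hcoef H i (mon n (k :: take m u)) * Wrec k l' (behead ts) (drop m u) j
  end.

Definition Q l (i j : nat) : {mpoly C[n]} :=
  \sum_(w <- typeseqs (m * l) n) \sum_(ts <- typeseqs l.-1 n)
     Wrec i l ts w j *: 'X_[mon n w].

Lemma QE l (i j : 'I_n) : (forall i, H i \is m.+1.-homog) -> (0 < l)%N ->
  Q l i j = ((m`!)%:R ^+ l) *: ((jacobian H) ^+ l) i j.
Proof.
move=> hom; elim: l i => [//|l IH] i _.
case: l IH => [|l] IH.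
  rewrite /Q muln1 /= big_seq.
  under eq_bigr => w hw.
    rewrite big_seq1 /= mulr1 take_oversize; last first.
      by move: hw; rewrite mem_typeseqs => /andP [/eqP -> _].
    over.
  by rewrite -big_seq Q1E // expr1 mxE.
rewrite [jacobian H ^+ _]exprS -[jacobian H * _]/(mulmx _ _) mxE scaler_sumr.
under [RHS]eq_bigr => k _.
  rewrite exprS -scalerA scalerAr scalerAl -IH // mxE -Q1E // /Q.
  rewrite mulr_suml; under eq_bigr => v _ do rewrite mulr_sumr.
  over.
rewrite /= exchange_big /Q mulnS big_typeseqsD big_seq [RHS]big_seq.
apply: eq_bigr => v hv.
have sv : size v = m by move: hv; rewrite mem_typeseqs => /andP [/eqP -> _].
rewrite [RHS]exchange_big; apply: eq_bigr => w _.
rewrite [typeseqs l.+1 n]/= big_allpairs_dep.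
have -> : iota 0 n = index_iota 0 n by rewrite /index_iota subn0.
rewrite big_mkord; apply: eq_bigr => k _; rewrite mulr_sumr.
apply: eq_bigr => ts _.
rewrite [Wrec _ _ _ _ _]/= take_size_cat // drop_size_cat // mon_cat mpolyXD.
by rewrite -scalerA scalerAr scalerAl.
Qed.

Lemma alg_main p (i j : 'I_n) U : (forall i, H i \is m.+1.-homog) -> (0 < p)%N ->
  (jacobian H) ^+ p = 0 -> size U = (m * p)%N -> all (fun x => (x < n)%N) U ->
  \sum_(w <- permutations U) \sum_(ts <- typeseqs p.-1 n) Wrec i p ts w j = 0.
Proof.
move=> hom p0 Hp sU aU.
have -> : \sum_(w <- permutations U) \sum_(ts <- typeseqs p.-1 n) Wrec i p ts w j =
  \sum_(w <- typeseqs (m * p) n | mon n w == mon n U) \sum_(ts <- typeseqs p.-1 n) Wrec i p ts w j.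
  rewrite -[RHS]big_filter; apply: perm_big; apply: uniq_perm.
  - exact: permutations_uniq.
  - exact/filter_uniq/typeseqs_uniq.
  move=> w; rewrite mem_permutations mem_filter mem_typeseqs.
  apply/idP/idP => [pw | /andP [E /andP [/eqP sw aw]]].
    by rewrite (mon_perm n pw) eqxx (perm_size pw) sU eqxx (perm_all (fun x : nat => (x < n)%N) pw) aU.
  by rewrite -(mon_eq_perm aw aU).
transitivity (mcoeff (mon n U) (Q p i j)).
  rewrite /Q raddf_sum big_mkcond; apply: eq_bigr => w _.
  rewrite raddf_sum /=; case: eqP => [->|ne].
    by apply: eq_bigr => ts _; rewrite mcoeffZ mcoeffX eqxx mulr1.
  by rewrite big1 // => ts _; rewrite mcoeffZ mcoeffX; case: eqP => // _; rewrite mulr0.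
by rewrite QE // Hp mxE scaler0 mcoeff0.
Qed.
End Alg.


Section Trees.
Variables (d n : nat).

Lemma wf_subtree t a : wf_tree d n t -> valid_path t a -> wf_tree d n (subtree_at t a).
Proof.
elim: a t => [|c a IH] [x|x ch] //= /and3P [_ _ wch] /andP [cs va].
by apply: IH => //; apply: (allP wch); apply: mem_nth.
Qed.

Lemma wf_rtype t : wf_tree d n t -> (rtype t < n)%N.
Proof. by case: t => [x|x ch] //= /and3P []. Qed.

Lemma rtype_replace T a s : valid_path T a -> rtype s = rtype (subtree_at T a) ->
  rtype (replace_at T a s) = rtype T.
Proof. by case: a => [|c a] //=; case: T. Qed.

Lemma set_nth_split (T : Type) (x0 : T) s c y : (c < size s)%N ->
  set_nth x0 s c y = take c s ++ y :: drop c.+1 s.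
Proof. by move=> cs; rewrite set_nthE cs. Qed.

Lemma nth_split (T : Type) (x0 : T) s c : (c < size s)%N ->
  s = take c s ++ nth x0 s c :: drop c.+1 s.
Proof. by move=> cs; rewrite -(drop_nth x0 cs) cat_take_drop. Qed.

Lemma subtree_replace T a s : valid_path T a -> subtree_at (replace_at T a s) a = s.
Proof.
elim: a T => [|c a IH] [x|x ch] //= /andP [cs va].
rewrite set_nth_split // nth_cat size_take cs ltnn subnn /=.
exact: IH.
Qed.

Lemma rtype_settype k t : rtype (settype k t) = k.
Proof. by case: t. Qed.

Lemma rtype_regraft t cs ts sibs : rtype (regraft t cs ts sibs) = rtype t.
Proof. by case: cs => [|c cs] //=; case: t. Qed.

Lemma wf_settype k t : (k < n)%N -> wf_tree d n t -> wf_tree d n (settype k t).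
Proof. by case: t => [x|x ch] /= kn //= /and3P [_ -> ->]; rewrite kn. Qed.

Lemma valid_settype k t cs : valid_path t cs -> valid_path (settype k t) cs.
Proof.
case: cs => [|c cs] //; case: t => [x|x ch] //= /andP [h v].
by rewrite h (set_nth_default (GenTree.Node x ch) _ h).
Qed.

Lemma subtree_settype k t c cs : valid_path t (c :: cs) ->
  subtree_at (settype k t) (c :: cs) = subtree_at t (c :: cs).
Proof.
by case: t => [x|x ch] //= /andP [cs' _]; rewrite (set_nth_default (GenTree.Node x ch) _ cs').
Qed.

Lemma mu_mon (ch : seq ttree) : mu n ch = mon n (map rtype ch).
Proof. by apply/mnmP => i; rewrite monE mnmE count_map. Qed.

End Trees.

Section EHs.
Variables (C : numFieldType) (d n : nat) (H : 'I_n -> {mpoly C[n]}).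

Lemma EH_node x ch : EH H (GenTree.Node x ch) = Hcoef H x (mu n ch) * \prod_(c <- ch) EH H c.
Proof.
rewrite /=; congr (_ * _); elim: ch => [|c ch IH]; first by rewrite big_nil.
by rewrite big_cons -IH.
Qed.

Lemma EH_replace T a : valid_path T a -> exists K, forall s,
  rtype s = rtype (subtree_at T a) -> EH H (replace_at T a s) = K * EH H s.
Proof.
elim: a T => [|c a IH] T va; first by exists 1 => s _; rewrite mul1r.
case: T va => [x|x ch] //= /andP [cs va].
have [K HK] := IH _ va.
exists (Hcoef H x (mu n ch) * (\prod_(y <- take c ch) EH H y) * K *
        \prod_(y <- drop c.+1 ch) EH H y) => s hs.
have Hmu : mu n (set_nth (GenTree.Node x ch) ch c (replace_at (nth (GenTree.Node x ch) ch c) a s)) = mu n ch.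
  rewrite !mu_mon set_nth_split // [in RHS](nth_split (GenTree.Node x ch) cs) !map_cat /=.
  by rewrite rtype_replace.
rewrite -/(EH H (GenTree.Node x _)) EH_node Hmu set_nth_split // big_cat big_cons HK //.
rewrite /=. ring.
Qed.
End EHs.

Section Regraft.
Variables (C : numFieldType) (n m : nat) (H : 'I_n -> {mpoly C[n]}).

Lemma foldr_prod l : foldr (fun c acc => EH H c * acc) 1 l = \prod_(c <- l) EH H c.
Proof. by elim: l => [|c l IH] /=; rewrite ?big_nil // big_cons -IH. Qed.

Lemma EH_regraft t cs ts sibs : (0 < n)%N -> wf_tree m.+1 n t -> valid_path t cs ->
  all (fun x => (x < n)%N) ts -> size sibs = (m * size cs)%N ->
  EH H (regraft t cs ts sibs) = (\prod_(x <- sibs) EH H x) * EH H (subtree_at t cs) *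
    @Wrec C n m H (rtype t) (size cs) ts (map rtype sibs) (rtype (subtree_at t cs)).
Proof.
move=> n0; elim: cs t ts sibs => [|c cs IH] t ts sibs wf vp ats ss.
  by move: ss; rewrite muln0 => /size0nil ->; rewrite /= big_nil mul1r mulr1.
case: t wf vp => [x|x ch] // wf vp.
have /= /and3P [xn /eqP sch wch] := wf.
have /= /andP [cc vp'] := vp.
set v := nth (GenTree.Node x ch) ch c in vp' *.
rewrite sch /=.
set v' := if cs is [::] then v else settype (head 0%N ts) v.
set R := regraft v' cs (behead ts) (drop m sibs).
set S := take m sibs.
have wv : wf_tree m.+1 n v by apply: (allP wch); apply: mem_nth.
have h0 : (head 0%N ts < n)%N by move: ats; case: (ts) => [|y l] //= /andP [].
have wv' : wf_tree m.+1 n v' by rewrite /v'; case: (cs) => // *; apply: wf_settype.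
have vv' : valid_path v' cs by rewrite /v'; case: (cs) vp' => // *; apply: valid_settype.
have Hsub : subtree_at v' cs = subtree_at v cs.
  by rewrite /v'; case: (cs) vp' => // c' cs' vp'; apply: subtree_settype.
have Hk : (if size cs is 0 then rtype (subtree_at v cs) else head 0%N ts) = rtype v'.
  by rewrite /v'; case: (cs) => //= _ _; rewrite rtype_settype.
have ats' : all (fun x => (x < n)%N) (behead ts) by move: ats; case: (ts) => //= y l /andP [].
have ss' : size (drop m sibs) = (m * size cs)%N by rewrite size_drop ss /= mulnS addKn.
rewrite foldr_prod.
have -> : mu n (take c S ++ R :: drop c S) = mon n (rtype v' :: take m (map rtype sibs)).
  rewrite mu_mon; apply: mon_perm; rewrite map_cat /= rtype_regraft.
  apply/seq.permP => P /=; rewrite !count_cat /= addnCA -count_cat -map_cat cat_take_drop.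
  by rewrite map_take.
rewrite big_cat big_cons /= /R IH // Hsub.
have Ps : \prod_(x <- sibs) EH H x = \prod_(x <- S) EH H x * \prod_(x <- drop m sibs) EH H x.
  by rewrite -big_cat cat_take_drop.
have PS : \prod_(x <- S) EH H x = \prod_(x <- take c S) EH H x * \prod_(x <- drop c S) EH H x.
  by rewrite -big_cat cat_take_drop.
rewrite Ps PS map_drop Hk.
ring.
Qed.
End Regraft.

Fixpoint ptypes (t : ttree) (cs : seq nat) : seq nat :=
  match cs with
  | [::] => [::]
  | c :: cs' => match t with
                | GenTree.Leaf _ => [::]
                | GenTree.Node _ ch =>
                    let v := nth t ch c in
                    if cs' is [::] then [::] else rtype v :: ptypes v cs'
                end
  end.

Section Spine.
Variables (n m : nat).

Lemma regraft_cons x ch c cs ts sibs : size ch = m.+1 ->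
  regraft (GenTree.Node x ch) (c :: cs) ts sibs =
  GenTree.Node x (take c (take m sibs) ++
     regraft (if cs is [::] then nth (GenTree.Node x ch) ch c
              else settype (head 0%N ts) (nth (GenTree.Node x ch) ch c))
       cs (behead ts) (drop m sibs) :: drop c (take m sibs)).
Proof. by move=> sch; rewrite /= sch. Qed.

Lemma spine_ptypes_regraft t cs ts sibs : (0 < n)%N -> wf_tree m.+1 n t -> valid_path t cs ->
  all (fun x => (x < n)%N) ts -> size sibs = (m * size cs)%N -> size ts = (size cs).-1 ->
  spine_sibs (regraft t cs ts sibs) cs = sibs /\ ptypes (regraft t cs ts sibs) cs = ts.
Proof.
move=> n0; elim: cs t ts sibs => [|c cs IH] t ts sibs wf vp ats ss sts.
  by move: ss sts; rewrite muln0 => /size0nil -> /size0nil ->.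
case: t wf vp => [x|x ch] // wf vp.
have /and3P [xn /eqP sch wch] : [&& (x < n)%N, size ch == m.+1 & all (wf_tree m.+1 n) ch] := wf.
have /andP [cc vp'] : (c < size ch)%N && valid_path (nth (GenTree.Node x ch) ch c) cs := vp.
rewrite regraft_cons //.
set v := nth (GenTree.Node x ch) ch c in vp' *.
set v' := if cs is [::] then v else settype (head 0%N ts) v.
set R := regraft v' cs (behead ts) (drop m sibs).
set S := take m sibs.
have wv : wf_tree m.+1 n v by apply: (allP wch); apply: mem_nth.
have h0 : (head 0%N ts < n)%N by move: ats; case: (ts) => [|y l] //= /andP [].
have wv' : wf_tree m.+1 n v' by rewrite /v'; case: (cs) => // *; apply: wf_settype.
have vv' : valid_path v' cs by rewrite /v'; case: (cs) vp' => // *; apply: valid_settype.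
have ats' : all (fun x => (x < n)%N) (behead ts) by move: ats; case: (ts) => //= y l /andP [].
have ss' : size (drop m sibs) = (m * size cs)%N by rewrite size_drop ss /= mulnS addKn.
have sts' : size (behead ts) = (size cs).-1 by rewrite size_behead sts.
have [IH1 IH2] := IH v' (behead ts) (drop m sibs) wv' vv' ats' ss' sts'.
have sS : size S = m by rewrite size_takel // ss /= mulnS leq_addr.
have cm : (c <= m)%N by rewrite -ltnS -sch.
have stc : size (take c S) = c by rewrite size_takel // sS.
have Hn : nth (GenTree.Node x (take c S ++ R :: drop c S)) (take c S ++ R :: drop c S) c = R.
  by rewrite nth_cat stc ltnn subnn.
split.
  rewrite /= Hn take_size_cat // drop_cat stc ltnNge leqnSn subSnn /= -/R IH1.
  by rewrite drop0 catA cat_take_drop cat_take_drop.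
rewrite /= Hn IH2 rtype_regraft; move: sts; rewrite /v'.
case: (cs) => [|c' cs'] sts; first by case: (ts) sts.
by rewrite rtype_settype; case: (ts) sts.
Qed.

Lemma size_spine t cs : wf_tree m.+1 n t -> valid_path t cs ->
  size (spine_sibs t cs) = (m * size cs)%N.
Proof.
elim: cs t => [|c cs IH] t wf vp; first by rewrite muln0.
case: t wf vp => [x|x ch] // wf vp.
have /and3P [xn /eqP sch wch] : [&& (x < n)%N, size ch == m.+1 & all (wf_tree m.+1 n) ch] := wf.
have /andP [cc vp'] : (c < size ch)%N && valid_path (nth (GenTree.Node x ch) ch c) cs := vp.
have wv : wf_tree m.+1 n (nth (GenTree.Node x ch) ch c) by apply: (allP wch); apply: mem_nth.
rewrite /= !size_cat IH // size_take size_drop sch.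
move: cc; rewrite sch => cc; rewrite cc mulnS.
rewrite addnA; congr (_ + _)%N; rewrite subSS addnC subnK //.
Qed.

Lemma wf_spine t cs : wf_tree m.+1 n t -> valid_path t cs ->
  all (wf_tree m.+1 n) (spine_sibs t cs).
Proof.
elim: cs t => [|c cs IH] t wf vp //.
case: t wf vp => [x|x ch] // wf vp.
have /and3P [xn /eqP sch wch] : [&& (x < n)%N, size ch == m.+1 & all (wf_tree m.+1 n) ch] := wf.
have /andP [cc vp'] : (c < size ch)%N && valid_path (nth (GenTree.Node x ch) ch c) cs := vp.
have wv : wf_tree m.+1 n (nth (GenTree.Node x ch) ch c) by apply: (allP wch); apply: mem_nth.
rewrite /= !all_cat IH // andbT; apply/andP; split; apply/allP => y hy; apply: (allP wch).
  exact: mem_take hy.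
exact: mem_drop hy.
Qed.
End Spine.


Unset Implicit Arguments.

Theorem lemma3p6 (R : realType) (d n p : nat)
    (H : 'I_n -> {mpoly (complex R)[n]}) :
  (2 <= d)%N -> (1 <= n)%N -> (1 <= p <= n)%N ->
  (forall i, H i \is d.-homog) ->
  (jacobian H) ^+ p = 0 ->
  forall (T : ttree) (a cs : seq nat),
    wf_tree d n T ->
    valid_path T a ->
    size cs = p ->
    valid_path (subtree_at T a) cs ->
    \sum_(T' <- shuffle_class n T a cs) EH H T' = 0.
Proof.
move=> d2 n1 /andP [p1 _] hom Hp T a cs wT va scs vc.
case: d d2 hom wT => [|m] // _ hom wT.
set t0 := subtree_at T a in vc *.
have wt0 : wf_tree m.+1 n t0 by apply: wf_subtree.
set S := spine_sibs t0 cs.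
have sS : size S = (m * p)%N by rewrite (size_spine wt0 vc) scs.
have wS : all (wf_tree m.+1 n) S by apply: (wf_spine wt0 vc).
set f := fun sibs ts => replace_at T a (regraft t0 cs ts sibs).
have Hsh : shuffle_class n T a cs =
    [seq f sibs ts | sibs <- permutations S, ts <- typeseqs p.-1 n].
  rewrite /shuffle_class -/t0 -/S scs undup_id //.
  apply: allpairs_uniq; [exact: permutations_uniq | exact: typeseqs_uniq |].
  move=> [s1 t1] [s2 t2] /allpairsP [[s1' t1'] /= [h1 h2 [-> ->]]].
  move=> /allpairsP [[s2' t2'] /= [h1' h2' [-> ->]]] E.
  have := congr1 (fun X => subtree_at X a) E; rewrite /f !subtree_replace // => E'.
  move: h2 h2'; rewrite !mem_typeseqs => /andP [/eqP st1 at1] /andP [/eqP st2 at2].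
  move: h1 h1'; rewrite !mem_permutations => /perm_size ss1 /perm_size ss2.
  have [A1 B1] := spine_ptypes_regraft n1 wt0 vc at1 (etrans ss1 (etrans sS (congr1 _ (esym scs)))) (etrans st1 (congr1 _ (esym scs))).
  have [A2 B2] := spine_ptypes_regraft n1 wt0 vc at2 (etrans ss2 (etrans sS (congr1 _ (esym scs)))) (etrans st2 (congr1 _ (esym scs))).
  by congr pair; [rewrite -A1 E' A2 | rewrite -B1 E' B2].
rewrite Hsh big_allpairs_dep /=.
have [K HK] := EH_replace H va.
have i0n : (rtype t0 < n)%N by apply: wf_rtype wt0.
have j0n : (rtype (subtree_at t0 cs) < n)%N by apply: wf_rtype; apply: wf_subtree wt0 vc.
pose G (u : seq nat) := \sum_(ts <- typeseqs p.-1 n)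
   @Wrec _ n m H (rtype t0) p ts u (rtype (subtree_at t0 cs)).
transitivity (K * (\prod_(x <- S) EH H x) * EH H (subtree_at t0 cs) *
   \sum_(s <- permutations S) G (map rtype s)).
  rewrite mulr_sumr; apply: eq_big_seq => s hs; rewrite /G mulr_sumr.
  apply: eq_big_seq => ts hts.
  move: hts; rewrite mem_typeseqs => /andP [/eqP sts ats].
  move: hs; rewrite mem_permutations => ps.
  rewrite /f HK ?rtype_regraft // (EH_regraft H n1 wt0 vc ats); last by rewrite (perm_size ps) sS scs.
  by rewrite scs (perm_big _ ps) !mulrA.
suff -> : \sum_(s <- permutations S) G (map rtype s) = 0 by rewrite mulr0.
have sS' : size S == (m * p)%N by rewrite sS.
pose St : (m * p).-tuple ttree := Tuple sS'.
have E1 := sum_ps St (fun s => G (map rtype s)).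
have E2 := sum_ps (map_tuple rtype St) G.
have Ut0 : \sum_(w <- permutations (map rtype S)) G w = 0.
  apply: (@alg_main _ n m H p (Ordinal i0n) (Ordinal j0n)) => //.
    by rewrite size_map.
  apply/allP => x /mapP [y yS ->]; apply: wf_rtype; exact: (allP wS).
have E3 : \sum_(σ : 'S_(m * p)) G (map rtype (ps St σ)) =
          \sum_(σ : 'S_(m * p)) G (ps (map_tuple rtype St) σ).
  apply: eq_bigr => σ _; congr G; rewrite /ps /= -map_comp.
  by apply: eq_map => i /=; rewrite tnth_map.
move: E1; rewrite E3 E2 /= Ut0 mul0rn => /esym /eqP.
rewrite mulrn_eq0 (negbTE (lt0n_neq0 (card_ps_gt0 St))) /=.
by move/eqP.
Qed.
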